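(* Let $\mathbf e_1,\dots,\mathbf e_n\in\mathbb R^n$ be linearly independent, let $K=\{\sum_{i=1}^n\lambda^i\mathbf e_i:\lambda^i\ge 0\}$, and for each $i$ let $\mathbf u_i\in\mathbb R^n$ satisfy $\mathbf e_j^\top\mathbf u_i=0$ for $j\neq i$ and $\mathbf e_i^\top\mathbf u_i=-1$, so that $K^\circ=\{\sum_{i=1}^n\mu^i\mathbf u_i:\mu^i\ge 0\}$. Let $N=\{1,\dots,n\}$ and let $\mathbf x\in\mathbb R^n$. For each subset $I\subset N$, with complement $I^c=N\setminus I$, $\mathbf x$ can be represented in the form $$\mathbf x=\sum_{i\in I}\alpha^i\mathbf e_i+\sum_{j\in I^c}\beta^j\mathbf u_j$$ with real numbers $\alpha^i,\beta^j$. Among the subsets $I\subset N$ (the cases $I=\emptyset$ and $I=N$ included) there exists exactly one for which the coefficients in this representation satisfy $\beta^j>0$ for all $j\in I^c$ and $\alpha^i\ge 0$ for all $i\in I$. For this representation, $$\mathbf P_K\mathbf x=\sum_{i\in I}\alpha^i\mathbf e_i\ (\alpha^i\ge 0)\quad\text{and}\quad \mathbf P_{K^\circ}\mathbf x=\sum_{j\in I^c}\beta^j\mathbf u_j\ (\beta^j>0).$$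
   Context: The polar of $K$ is $K^\circ=\{\mathbf y\in\mathbb R^n:\mathbf y^\top\mathbf z\le 0\ \forall\mathbf z\in K\}$. For a nonempty closed convex set $C\subset\mathbb R^n$, $\mathbf P_C\mathbf x$ denotes the metric (Euclidean) projection of $\mathbf x$ onto $C$, i.e. the unique point of $C$ with $\|\mathbf x-\mathbf P_C\mathbf x\|=\min\{\|\mathbf x-\mathbf y\|:\mathbf y\in C\}$, where $\|\mathbf u\|=\sqrt{\mathbf u^\top\mathbf u}$. *)

(* Defs.v *)
From HB Require Import structures.
From mathcomp Require Import all_boot all_order all_algebra.
From mathcomp Require Import reals.
From Stdlib Require Import ClassicalEpsilon.
Set Implicit Arguments. Unset Strict Implicit. Unset Printing Implicit Defensive.
Import Order.TTheory GRing.Theory Num.Theory.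
Local Open Scope ring_scope.

Section Defs.
Variables (R : realType) (n : nat).

Definition dotv (u v : 'cV[R]_n) : R := (u^T *m v) 0 0.
Definition normv (u : 'cV[R]_n) : R := Num.sqrt (dotv u u).

Definition lin_indep (e : 'I_n -> 'cV[R]_n) : Prop :=
  forall lam : 'I_n -> R, \sum_(i < n) lam i *: e i = 0 -> forall i, lam i = 0.

Definition gen_cone (e : 'I_n -> 'cV[R]_n) (z : 'cV[R]_n) : Prop :=
  exists lam : 'I_n -> R, (forall i, 0 <= lam i) /\ z = \sum_(i < n) lam i *: e i.

Definition polar (K : 'cV[R]_n -> Prop) (y : 'cV[R]_n) : Prop :=
  forall z, K z -> dotv y z <= 0.

Definition is_proj (C : 'cV[R]_n -> Prop) (x p : 'cV[R]_n) : Prop :=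
  C p /\ forall y, C y -> normv (x - p) <= normv (x - y).

(* Metric projection P_C x: the (unique, for C nonempty closed convex)
   nearest point of C to x, chosen by Hilbert's epsilon. *)
Definition proj (C : 'cV[R]_n -> Prop) (x : 'cV[R]_n) : 'cV[R]_n :=
  epsilon (inhabits x) (is_proj C x).

End Defs.

(* Main.v *)
Require Import Defs.
From HB Require Import structures.
From mathcomp Require Import all_boot all_order all_algebra.
From mathcomp Require Import reals.
From Stdlib Require Import ClassicalEpsilon.
From mathcomp Require Import ring lra.
Set Implicit Arguments. Unset Strict Implicit. Unset Printing Implicit Defensive.
Import Order.TTheory GRing.Theory Num.Theory.
Local Open Scope ring_scope.

Section Dot.
Variables (R : realType) (n : nat).
Implicit Types (v w z : 'cV[R]_n).

Lemma dotvE v w : dotv v w = \sum_k v k 0 * w k 0.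
Proof. by rewrite /dotv mxE; apply: eq_bigr => k _; rewrite mxE. Qed.

Lemma dotvC v w : dotv v w = dotv w v.
Proof. by rewrite !dotvE; apply: eq_bigr => k _; rewrite mulrC. Qed.

Lemma dotvDl v w z : dotv (v + w) z = dotv v z + dotv w z.
Proof. by rewrite !dotvE -big_split; apply: eq_bigr => k _; rewrite !mxE mulrDl. Qed.

Lemma dotvZl a v w : dotv (a *: v) w = a * dotv v w.
Proof. by rewrite !dotvE mulr_sumr; apply: eq_bigr => k _; rewrite !mxE mulrA. Qed.

Lemma dotvNl v w : dotv (- v) w = - dotv v w.
Proof. by rewrite -scaleN1r dotvZl mulN1r. Qed.

Lemma dotvBl v w z : dotv (v - w) z = dotv v z - dotv w z.
Proof. by rewrite dotvDl dotvNl. Qed.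

Lemma dotv0l w : dotv 0 w = 0.
Proof. by rewrite dotvE big1 // => k _; rewrite mxE mul0r. Qed.

Lemma dotvDr v w z : dotv z (v + w) = dotv z v + dotv z w.
Proof. by rewrite !(dotvC z) dotvDl. Qed.
Lemma dotvZr a v w : dotv w (a *: v) = a * dotv w v.
Proof. by rewrite !(dotvC w) dotvZl. Qed.
Lemma dotvNr v w : dotv w (- v) = - dotv w v.
Proof. by rewrite !(dotvC w) dotvNl. Qed.
Lemma dotvBr v w z : dotv z (v - w) = dotv z v - dotv z w.
Proof. by rewrite !(dotvC z) dotvBl. Qed.

Lemma dotv_suml (I : finType) (P : pred I) (F : I -> 'cV[R]_n) w :
  dotv (\sum_(i | P i) F i) w = \sum_(i | P i) dotv (F i) w.
Proof.
exact: (big_morph (fun v => dotv v w) (fun a b => dotvDl a b w) (dotv0l w)).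
Qed.

Lemma dotv_sumr (I : finType) (P : pred I) (F : I -> 'cV[R]_n) w :
  dotv w (\sum_(i | P i) F i) = \sum_(i | P i) dotv w (F i).
Proof. by rewrite dotvC dotv_suml; apply: eq_bigr => i _; rewrite dotvC. Qed.

Lemma dotv_ge0 v : 0 <= dotv v v.
Proof. by rewrite dotvE sumr_ge0 // => k _; rewrite -expr2 sqr_ge0. Qed.

Lemma dotv_eq0 v : dotv v v = 0 -> v = 0.
Proof.
rewrite dotvE => /psumr_eq0P H.
apply/matrixP => k j; rewrite (ord1 j) mxE.
have H0 : forall i : 'I_n, true -> 0 <= v i 0 * v i 0.
  by move=> i _; rewrite -expr2 sqr_ge0.
by have /eqP := H H0 k isT; rewrite mulf_eq0 orbb => /eqP.
Qed.

Lemma dotv_sq v w : dotv (v + w) (v + w) = dotv v v + 2 * dotv v w + dotv w w.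
Proof. rewrite dotvDl !dotvDr (dotvC w v). by rewrite mulr2n mulrDl mul1r !addrA. Qed.

Lemma normv_le v w : (normv v <= normv w) = (dotv v v <= dotv w w).
Proof. by rewrite /normv ler_sqrt // dotv_ge0. Qed.

End Dot.
Section Proj.
Variables (R : realType) (n : nat).

Lemma proj_VI (C : 'cV[R]_n -> Prop) (x p : 'cV[R]_n) : C p ->
  (forall y, C y -> dotv (x - p) (y - p) <= 0) -> proj C x = p.
Proof.
move=> Cp VI.
have key : forall y, C y ->
    dotv (x - p) (x - p) + dotv (y - p) (y - p) <= dotv (x - y) (x - y).
  move=> y Cy; have -> : x - y = (x - p) + (- (y - p)) by rewrite opprB addrA subrK.
  rewrite (@dotv_sq R n (x - p)) dotvNr dotvNl dotvNr opprK.
  idtac.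
  have := VI y Cy; lra.
have hp : is_proj C x p.
  split => // y Cy; rewrite normv_le; apply: le_trans (key y Cy).
  by rewrite lerDl dotv_ge0.
have := epsilon_spec (inhabits x) (is_proj C x) (ex_intro _ p hp).
rewrite -/(proj C x); set q := proj C x => -[Cq Hq].
have := Hq p Cp; rewrite normv_le => h1.
have h2 := key q Cq.
have h3 : dotv (q - p) (q - p) <= 0.
  by rewrite -(lerD2l (dotv (x - p) (x - p))) addr0 (le_trans h2 h1).
apply/eqP; rewrite -subr_eq0; apply/eqP/dotv_eq0/eqP.
by rewrite eq_le h3 dotv_ge0.
Qed.

End Proj.
Section Span.
Variables (R : realType) (n : nat).

Lemma span_indep (w : 'I_n -> 'cV[R]_n) : lin_indep w ->
  forall x, exists c : 'I_n -> R, x = \sum_i c i *: w i.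
Proof.
move=> hw x.
pose A : 'M[R]_n := \matrix_(i, k) w i k 0.
have rowA : forall v : 'rV[R]_n, v *m A = (\sum_i v 0 i *: w i)^T.
  move=> v; apply/matrixP => i k; rewrite !mxE summxE.
  by apply: eq_bigr => j _; rewrite !mxE (ord1 i).
have fA : row_free A.
  apply: inj_row_free => v; rewrite rowA => hv.
  have hs : \sum_i v 0 i *: w i = 0 by apply: trmx_inj; rewrite hv trmx0.
  apply/rowP => i; rewrite mxE; exact: (hw _ hs).
have uA : A \in unitmx by rewrite -row_free_unit.
exists (fun i => (x^T *m invmx A) 0 i).
apply: trmx_inj; rewrite -rowA.
by rewrite mulmxKV.
Qed.

End Span.
Section Main.
Variables (R : realType) (n : nat) (e u : 'I_n -> 'cV[R]_n).
Hypothesis hu : forall i j : 'I_n, dotv (e j) (u i) = if j == i then -1 else 0.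

Definition E (a : 'I_n -> R) := \sum_i a i *: e i.
Definition U (a : 'I_n -> R) := \sum_i a i *: u i.

Lemma sum_mask (v : 'I_n -> 'cV[R]_n) (I : {set 'I_n}) (al : 'I_n -> R) :
  \sum_(i in I) al i *: v i = \sum_i (if i \in I then al i else 0) *: v i.
Proof. by rewrite big_mkcond; apply: eq_bigr => i _; case: ifP; rewrite ?scale0r. Qed.

Lemma dot_e_U k b : dotv (e k) (U b) = - b k.
Proof.
rewrite /U dotv_sumr (bigD1 k) //= big1 ?addr0.
  by rewrite dotvZr hu eqxx mulrN1.
by move=> j /negPf jk; rewrite dotvZr hu eq_sym jk mulr0.
Qed.

Lemma dot_E_U a b : dotv (E a) (U b) = - \sum_i a i * b i.
Proof.
rewrite /E dotv_suml -sumrN; apply: eq_bigr => i _.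
by rewrite dotvZl dot_e_U mulrN.
Qed.

Lemma E_ge0_U a b : (forall i, 0 <= a i) -> (forall i, 0 <= b i) -> dotv (U b) (E a) <= 0.
Proof.
move=> ha hb; rewrite dotvC dot_E_U oppr_le0 sumr_ge0 // => i _.
exact: mulr_ge0.
Qed.

Lemma part3 (x : 'cV[R]_n) (I : {set 'I_n}) (alpha beta : 'I_n -> R) :
  x = \sum_(i in I) alpha i *: e i + \sum_(j in ~: I) beta j *: u j ->
  (forall j, j \in ~: I -> 0 < beta j) ->
  (forall i, i \in I -> 0 <= alpha i) ->
  proj (gen_cone e) x = \sum_(i in I) alpha i *: e i /\
  proj (polar (gen_cone e)) x = \sum_(j in ~: I) beta j *: u j.
Proof.
move=> hx0 hb ha.
pose a := fun i => if i \in I then alpha i else 0.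
pose b := fun i => if i \in ~: I then beta i else 0.
have hx : x = E a + U b by rewrite hx0 !sum_mask.
rewrite !sum_mask -/(E a) -/(U b).
have a0 : forall i, 0 <= a i by move=> i; rewrite /a; case: ifP => // /ha.
have b0 : forall i, 0 <= b i.
  by move=> i; rewrite /b; case: ifP => // /hb /ltW.
have pq : dotv (E a) (U b) = 0.
  rewrite dot_E_U big1 ?oppr0 // => i _; rewrite /a /b in_setC.
  by case: (i \in I); rewrite ?mulr0 ?mul0r.
have qK : forall y, gen_cone e y -> dotv (U b) y <= 0.
  by move=> y [lam [hl ->]]; apply: E_ge0_U.
have Kp : gen_cone e (E a) by exists a.
split.
  apply: proj_VI => // y Ky.
  rewrite (_ : x - E a = U b); last by rewrite hx addrC addKr.
  by rewrite dotvBr (@dotvC R n (U b) (E a)) pq subr0 qK.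
apply: proj_VI => // y Py.
rewrite hx addrK dotvBr pq subr0 dotvC; exact: Py.
Qed.

End Main.
Section Part1.
Variables (R : realType) (n : nat) (e u : 'I_n -> 'cV[R]_n).
Hypothesis hu : forall i j : 'I_n, dotv (e j) (u i) = if j == i then -1 else 0.
Hypothesis he : lin_indep e.

Lemma split_w (I : {set 'I_n}) (c : 'I_n -> R) :
  \sum_i c i *: (if i \in I then e i else u i) =
  \sum_i (if i \in I then c i else 0) *: e i +
  \sum_i (if i \in ~: I then c i else 0) *: u i.
Proof.
rewrite -big_split; apply: eq_bigr => i _; rewrite in_setC.
by case: (i \in I); rewrite /= !scale0r ?addr0 ?add0r.
Qed.

Lemma part1 (x : 'cV[R]_n) (I : {set 'I_n}) : exists alpha beta : 'I_n -> R,
  x = \sum_(i in I) alpha i *: e i + \sum_(j in ~: I) beta j *: u j.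
Proof.
pose w i := if i \in I then e i else u i.
have hw : lin_indep w.
  move=> c hc.
  pose a := fun i => if i \in I then c i else 0.
  pose b := fun i => if i \in ~: I then c i else 0.
  have hab : E e a + U u b = 0 by rewrite -hc /w split_w.
  have h0 : dotv (E e a) (U u b) = 0.
    rewrite (dot_E_U hu) big1 ?oppr0 // => i _; rewrite /a /b in_setC.
    by case: (i \in I); rewrite ?mulr0 ?mul0r.
  have hEb : U u b = - E e a by apply/eqP; rewrite -addr_eq0 addrC hab.
  have hEa : E e a = 0.
    apply: dotv_eq0; apply/eqP; rewrite -oppr_eq0 -dotvNr -hEb h0 //.
  have hb : forall k, b k = 0.
    move=> k; apply/eqP; rewrite -oppr_eq0 -(dot_e_U hu) hEb hEa oppr0.
    by rewrite dotvC dotv0l.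
  move=> i; case hi: (i \in I).
    by have := he hEa i; rewrite /a hi.
  by have := hb i; rewrite /b in_setC hi.
have [c hc] := span_indep hw x.
exists c, c; by rewrite !sum_mask hc /w split_w.
Qed.

End Part1.
Lemma finmin (R : realType) (T : finType) (P : pred T) (g : T -> R) (i0 : T) :
  P i0 -> exists j, P j /\ forall i, P i -> g j <= g i.
Proof.
move=> Pi0; case: (arg_minP g Pi0) => j Pj H.
by exists j; split.
Qed.

Section Part2.
Variables (R : realType) (n : nat) (e u : 'I_n -> 'cV[R]_n).
Hypothesis hu : forall i j : 'I_n, dotv (e j) (u i) = if j == i then -1 else 0.
Hypothesis he : lin_indep e.
Variable x : 'cV[R]_n.

Lemma rep_ex (J : {set 'I_n}) : exists ab : ('I_n -> R) * ('I_n -> R),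
  x = E e ab.1 + U u ab.2 /\ (forall i, i \notin J -> ab.1 i = 0) /\
  (forall i, i \in J -> ab.2 i = 0).
Proof.
have [al [be hx]] := part1 hu he x J.
exists (fun i => if i \in J then al i else 0, fun i => if i \in ~: J then be i else 0).
split; first by rewrite hx !sum_mask.
split=> i /=; first by move/negPf ->.
by rewrite in_setC => ->.
Qed.

Definition repf J := proj1_sig (constructive_indefinite_description _ (rep_ex J)).
Definition aJ J := (repf J).1.
Definition bJ J := (repf J).2.
Lemma repP J : x = E e (aJ J) + U u (bJ J) /\ (forall i, i \notin J -> aJ J i = 0) /\
  (forall i, i \in J -> bJ J i = 0).
Proof. exact: (proj2_sig (constructive_indefinite_description _ (rep_ex J))). Qed.

Definition F v := dotv (x - v) (x - v).
Definition supp (l : 'I_n -> R) := [set i | l i != 0].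
Definition feas J := forall i, 0 <= aJ J i.

Lemma segment p r y t : x = p + r -> dotv r (p - y) = 0 ->
  F (y + t *: (p - y)) = dotv r r + (1 - t) ^+ 2 * dotv (p - y) (p - y).
Proof.
move=> hx h0; rewrite /F.
have -> : x - (y + t *: (p - y)) = r + (1 - t) *: (p - y).
  by rewrite hx; apply/matrixP => i j; rewrite !mxE; ring.
rewrite dotv_sq dotvZr h0 mulr0 mulr0 addr0 dotvZl dotvZr mulrA expr2.
by [].
Qed.

Lemma E_lin l a t : E e (fun i => l i + t * (a i - l i)) = E e l + t *: (E e a - E e l).
Proof.
rewrite /E -sumrB scaler_sumr -big_split; apply: eq_bigr => i _ /=.
by rewrite scalerDl -scalerBl scalerA.
Qed.

Lemma E_bump a t k : E e (fun i => a i + (if i == k then t else 0)) = E e a + t *: e k.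
Proof.
rewrite /E; under eq_bigr do rewrite scalerDl.
rewrite big_split /=; congr (_ + _).
rewrite (bigD1 k) //= eqxx big1 ?addr0 // => i /negPf ->.
by rewrite scale0r.
Qed.

End Part2.
Section Part2b.
Variables (R : realType) (n : nat) (e u : 'I_n -> 'cV[R]_n).
Hypothesis hu : forall i j : 'I_n, dotv (e j) (u i) = if j == i then -1 else 0.
Hypothesis he : lin_indep e.
Variable x : 'cV[R]_n.

Notation aJ := (aJ hu he x).
Notation bJ := (bJ hu he x).
Notation F := (F x).
Notation feas := (feas hu he x).

Lemma step l : (forall i, 0 <= l i) ->
  (exists J, feas J /\ F (E e (aJ J)) <= F (E e l)) \/
  (exists m, (forall i, 0 <= m i) /\ (#|supp m| < #|supp l|)%N /\ F (E e m) <= F (E e l)).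
Proof.
move=> l0.
set J := supp l.
have [hx [ha hb]] := repP hu he x J.
set a := aJ J in hx ha *; set b := bJ J in hx hb *.
have lJ : forall i, i \notin J -> l i = 0.
  by move=> i; rewrite inE negbK => /eqP.
have h0 : dotv (U u b) (E e a - E e l) = 0.
  rewrite dotvBr !(dotvC (U u b)) !(dot_E_U hu).
  rewrite [\sum_i a i * b i]big1; last first.
    by move=> i _; case iJ: (i \in J); [by rewrite hb ?mulr0 | by rewrite ha ?mul0r // iJ].
  rewrite [\sum_i l i * b i]big1 ?subrr //.
  by move=> i _; case iJ: (i \in J); [by rewrite hb ?mulr0 | by rewrite lJ ?mul0r // iJ].
have seg := fun t => segment t hx h0.
set c := dotv (E e a - E e l) (E e a - E e l).
have c0 : 0 <= c by apply: dotv_ge0.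
have Fl : F (E e l) = dotv (U u b) (U u b) + c.
  by have := seg 0; rewrite scale0r addr0 subr0 expr1n mul1r.
case: (boolP [forall i, 0 <= a i]) => [/forallP fa | nfa].
  left; exists J; split => //.
  have := seg 1; rewrite scale1r addrC subrK subrr expr0n /= mul0r addr0 => ->.
  by rewrite Fl lerDl.
right.
have [i1 ni1] : exists i, a i < 0.
  move: nfa; rewrite negb_forall => /existsP [i hi]; exists i.
  by rewrite ltNge.
pose g i := l i / (l i - a i).
have [i0 [ni0 hmin]] := finmin g (P := fun i => a i < 0) ni1.
have pos : forall i, a i < 0 -> 0 < l i.
  move=> i ai; rewrite lt_def l0 andbT.
  have : i \in J.
    by apply: contraLR ai => /ha ->; rewrite ltxx.
  by rewrite inE.
set t := g i0.
have den0 : 0 < l i0 - a i0 by have := pos i0 ni0; lra.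
have ht : t * (l i0 - a i0) = l i0 by rewrite /t /g divfK // gt_eqF.
have t0 : 0 <= t by rewrite /t /g divr_ge0 // ltW.
have t1 : t <= 1.
  have := pos i0 ni0; nra.
pose m i := l i + t * (a i - l i).
exists m; split; [|split].
- move=> i; rewrite /m.
  case: (ltP (a i) 0) => ai.
    have dp : 0 < l i - a i by have := pos i ai; lra.
    have : t <= g i by exact: hmin.
    rewrite /g ler_pdivlMr // => h; lra.
  by have := l0 i; nra.
- have sub : supp m \subset J :\ i0.
    apply/subsetP => i; rewrite inE => mi; rewrite in_setD1.
    have iJ : i \in J.
      apply: contraR mi => iJ; rewrite /m lJ // ha // ?subrr mulr0 addr0 //.
    rewrite iJ andbT; apply: contraNneq mi => ->; rewrite /m.
    by apply/eqP; lra.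
  apply: (leq_ltn_trans (subset_leq_card sub)).
  have i0J : i0 \in J.
    by rewrite inE gt_eqF // pos.
  by rewrite (cardsD1 i0 J) i0J.
- rewrite /m E_lin seg Fl lerD2l.
  have h1t : 0 <= 1 - t by lra.
  rewrite -/c.
  have h2t : 0 <= 2 - t by lra.
  have := mulr_ge0 (mulr_ge0 t0 h2t) c0.
  nra.
Qed.

End Part2b.
Section Part2c.
Variables (R : realType) (n : nat) (e u : 'I_n -> 'cV[R]_n).
Hypothesis hu : forall i j : 'I_n, dotv (e j) (u i) = if j == i then -1 else 0.
Hypothesis he : lin_indep e.
Variable x : 'cV[R]_n.

Notation aJ := (aJ hu he x).
Notation bJ := (bJ hu he x).
Notation F := (F x).
Notation feas := (feas hu he x).

Lemma descent k : forall l, (#|supp l| <= k)%N -> (forall i, 0 <= l i) ->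
  exists J, feas J /\ F (E e (aJ J)) <= F (E e l).
Proof.
elim: k => [|k IH] l hk l0.
  case: (step hu he x l0) => [//|[m [m0 [hm Fm]]]].
  by move: hk; rewrite leqn0 => /eqP h; rewrite h in hm.
case: (step hu he x l0) => [//|[m [m0 [hm Fm]]]].
have hm' : (#|supp m| <= k)%N by rewrite -ltnS (leq_trans hm).
have [J [fJ FJ]] := IH m hm' m0.
by exists J; split => //; apply: le_trans Fm.
Qed.

Lemma exist_part : exists I : {set 'I_n}, exists alpha beta : 'I_n -> R,
      x = \sum_(i in I) alpha i *: e i + \sum_(j in ~: I) beta j *: u j /\
      (forall j, j \in ~: I -> 0 < beta j) /\
      (forall i, i \in I -> 0 <= alpha i).
Proof.
have f0 : [forall i, 0 <= aJ set0 i].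
  apply/forallP => i; have [_ [ha _]] := repP hu he x set0.
  by rewrite ha // inE.
have [J0 [fJ0 hmin]] := finmin (fun J => F (E e (aJ J)))
   (P := fun J => [forall i, 0 <= aJ J i]) f0.
have [hx [ha hb]] := repP hu he x J0.
set a := aJ J0 in hx ha hmin fJ0 *; set b := bJ J0 in hx hb *.
move/forallP: fJ0 => a0.
have FJ0 : F (E e a) = dotv (U u b) (U u b).
  by rewrite /F hx addrC addKr.
have b0 : forall k, 0 <= b k.
  move=> k; rewrite leNgt; apply/negP => bk.
  set E0 := dotv (e k) (e k).
  have E00 : 0 <= E0 by apply: dotv_ge0.
  pose t := if E0 == 0 then 1 else - b k / E0.
  have tp : 0 < t.
    rewrite /t; case: eqP => // /eqP nz.
    by rewrite divr_gt0 ?oppr_gt0 // lt_def nz.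
  have key : 2 * t * b k + t ^+ 2 * E0 < 0.
    rewrite /t; case: eqP => [->|/eqP nz]; first by rewrite mulr0 addr0 mulr1; lra.
    have hE : (- b k / E0) * E0 = - b k by rewrite divfK.
    have tp' : 0 < - b k / E0 by move: tp; rewrite /t (negPf nz).
    rewrite expr2 -[_ * _ * E0]mulrA hE.
    have bk' : 0 < - b k by lra.
    have := mulr_gt0 tp' bk'.
    set T := - b k / E0. nra.
  pose l := fun i => a i + (if i == k then t else 0).
  have l0 : forall i, 0 <= l i.
    move=> i; rewrite /l; case: eqP => _; have := a0 i; lra.
  have [J [fJ FJ]] := descent (leqnn _) l0.
  have FL : F (E e l) < F (E e a).
    rewrite /l E_bump FJ0 /F.
    have -> : x - (E e a + t *: e k) = U u b + - (t *: e k).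
      by rewrite hx opprD addrA (addrC (E e a)) addrK.
    rewrite dotv_sq dotvNr dotvNl dotvNr opprK dotvZr dotvZl dotvZr.
    rewrite (dotvC (U u b)) (dot_e_U hu) -/E0.
    have : 2 * t * b k + t ^+ 2 * E0 < 0 := key.
    rewrite expr2; lra.
  have := hmin J; move/(_ (introT forallP fJ)) => hJ.
  by have := lt_le_trans FL (le_trans hJ FJ); rewrite ltxx.
exists (J0 :|: [set k | b k == 0]), a, b.
split; last split.
- rewrite !sum_mask hx; congr (_ + _); apply: eq_bigr => i _.
    case: ifP => // /negbT iI; rewrite ha ?scale0r //.
    by apply: contra iI => iJ; rewrite inE iJ.
  case: ifP => // /negbT; rewrite in_setC negbK !inE => /orP [/hb -> | /eqP ->];
  by rewrite scale0r.
- move=> j; rewrite in_setC inE negb_or inE => /andP [_ bj].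
  by rewrite lt_def bj b0.
- by move=> i _; apply: a0.
Qed.

End Part2c.
Theorem theorem2 (R : realType) (n : nat) (e u : 'I_n -> 'cV[R]_n)
    (x : 'cV[R]_n)
    (he : lin_indep e)
    (hu : forall i j : 'I_n, dotv (e j) (u i) = if j == i then -1 else 0) :
  let K := gen_cone e in
  let Kpol := polar K in
  (forall I : {set 'I_n}, exists alpha beta : 'I_n -> R,
      x = \sum_(i in I) alpha i *: e i + \sum_(j in ~: I) beta j *: u j) /\
  (exists! I : {set 'I_n}, exists alpha beta : 'I_n -> R,
      x = \sum_(i in I) alpha i *: e i + \sum_(j in ~: I) beta j *: u j /\
      (forall j, j \in ~: I -> 0 < beta j) /\
      (forall i, i \in I -> 0 <= alpha i)) /\
  (forall (I : {set 'I_n}) (alpha beta : 'I_n -> R),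
      x = \sum_(i in I) alpha i *: e i + \sum_(j in ~: I) beta j *: u j ->
      (forall j, j \in ~: I -> 0 < beta j) ->
      (forall i, i \in I -> 0 <= alpha i) ->
      proj K x = \sum_(i in I) alpha i *: e i /\
      proj Kpol x = \sum_(j in ~: I) beta j *: u j).
Proof.
move=> K Kpol; rewrite /Kpol /K.
split; first by move=> I; exact: part1 hu he x I.
split; last first.
  move=> I al be hx hb ha. have H := part3 hu hx hb ha. exact: H.
have [I HI] := exist_part hu he x.
exists I; split => // I' HI'.
case: HI => [al [be [hx [hb ha]]]]; case: HI' => [al' [be' [hx' [hb' ha']]]].
have [_ q1] := part3 hu hx hb ha; have [_ q2] := part3 hu hx' hb' ha'.
have hq := etrans (esym q1) q2.
apply/setP => k.
have h1 := dot_e_U hu k (fun i => if i \in ~: I then be i else 0).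
have h2 := dot_e_U hu k (fun i => if i \in ~: I' then be' i else 0).
rewrite /U -!sum_mask in h1 h2. rewrite hq h2 in h1.
move/oppr_inj: h1 => h.
have := hb k; have := hb' k; move: h; rewrite !in_setC.
case k1: (k \in I); case k2: (k \in I') => //= h H1 H2.
  by have := H1 isT; rewrite -h ltxx.
by have := H2 isT; rewrite h ltxx.
Qed.
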